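(* Let $n\ge1$. The path $P_n$ admits an extended irregular dominating labeling if and only if $n\ne 2,3$.
   Context: $P_n$ is the path on $n$ vertices $[x_1,\dots,x_n]$ with edges $\{x_i,x_{i+1}\}$, $1\le i\le n-1$. In a finite simple graph $\Gamma=(V,E)$ with distance $d$, a vertex $v$ carrying a non-negative integer label $\ell$ dominates (covers) exactly the vertices $u$ with $d(u,v)=\ell$; a vertex labeled $0$ dominates only itself. An extended irregular dominating labeling is a labeling $\lambda:S\to\mathbb{Z}_{\ge0}$ of a set $S\subseteq V$ with distinct labels on distinct vertices, such that every vertex of $V$ is dominated by some vertex of $S$, and some vertex of $S$ has label $0$. *)

(* Defs.v *)
From mathcomp Require Import all_boot.
Set Implicit Arguments. Unset Strict Implicit. Unset Printing Implicit Defensive.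

Definition walk_of_len (V : finType) (e : rel V) (k : nat) (u v : V) : Prop :=
  exists s : seq V, [/\ size s = k, path e u s & last u s = v].

Definition gdist_is (V : finType) (e : rel V) (u v : V) (k : nat) : Prop :=
  walk_of_len e k u v /\ forall j, j < k -> ~ walk_of_len e j u v.

Definition dominates (V : finType) (e : rel V) (v : V) (l : nat) (u : V) : Prop :=
  gdist_is e u v l.

Definition ext_irr_dom_labeling (V : finType) (e : rel V)
    (S : {set V}) (lam : V -> nat) : Prop :=
  [/\ {in S &, injective lam},
      (forall u : V, exists2 v, v \in S & dominates e v (lam v) u)
    & exists2 v, v \in S & lam v = 0].

Definition has_ext_irr_dom_labeling (V : finType) (e : rel V) : Prop :=
  exists (S : {set V}) (lam : V -> nat), ext_irr_dom_labeling e S lam.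

(* The path P_n on vertices x_1..x_n, here x_{i+1} = i : 'I_n,
   with edges {x_i, x_{i+1}} *)
Definition path_rel (n : nat) : rel 'I_n :=
  fun i j => (i.+1 == j :> nat) || (j.+1 == i :> nat).
Arguments path_rel : clear implicits.

(* Main.v *)
Require Import Defs.
From mathcomp Require Import all_boot.
From mathcomp Require Import zify.

Definition nd (a b : nat) := (a - b) + (b - a).

Lemma walk_lb n (u v : 'I_n) s :
  path (path_rel n) u s -> last u s = v -> nd u v <= size s.
Proof.
elim: s u => [|x s IH] u /=.
  by move=> _ <-; rewrite /nd; lia.
move=> /andP[hux hp] hl. have := IH x hp hl.
move: hux; rewrite /path_rel /nd => /orP[/eqnP|/eqnP]; lia.
Qed.

Lemma walk_ex n (u v : 'I_n) : walk_of_len (path_rel n) (nd u v) u v.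
Proof.
suff: forall d (u : 'I_n), nd u v = d -> walk_of_len (path_rel n) d u v by apply.
elim=> [|d IH] w hw.
  have -> : w = v by apply: val_inj => /=; move: hw; rewrite /nd; lia.
  by exists [::].
have hv := ltn_ord v.
case: (ltnP w v) => hwv.
  have h : w.+1 < n by lia.
  have [s [hs hp hl]] := IH (Ordinal h) ltac:(move: hw; rewrite /nd /=; lia).
  exists (Ordinal h :: s); split => //=; first by rewrite hs.
  by rewrite hp andbT /path_rel /= eqxx.
have hw' := ltn_ord w.
have h : w - 1 < n by lia.
have [s [hs hp hl]] := IH (Ordinal h) ltac:(move: hw; rewrite /nd /=; lia).
exists (Ordinal h :: s); split => //=; first by rewrite hs.
rewrite hp andbT /path_rel /=; apply/orP; right; apply/eqP.
move: hw; rewrite /nd; lia.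
Qed.

Lemma gdist_iff n (u v : 'I_n) k : gdist_is (path_rel n) u v k <-> k = nd u v.
Proof.
split.
  move=> [[s [hs hp hl]] hmin].
  have := @walk_lb _ _ _ _ hp hl; rewrite hs => h1.
  case: (ltnP (nd u v) k) => h; last by lia.
  by case: (hmin _ h (@walk_ex _ u v)).
move=> ->; split; first exact: walk_ex.
move=> j hj [s [hs hp hl]]; have := @walk_lb _ _ _ _ hp hl; rewrite hs; lia.
Qed.

Lemma of_nat n (inS : nat -> bool) (lab cov : nat -> nat) :
  (forall u, u < n -> [/\ cov u < n, inS (cov u) & lab (cov u) = nd u (cov u)]) ->
  (forall u v, u < n -> v < n -> inS u -> inS v -> lab u = lab v -> u = v) ->
  (exists z, [/\ z < n, inS z & lab z = 0]) ->
  has_ext_irr_dom_labeling (path_rel n).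
Proof.
move=> Hc Hi [z [hz hzS hz0]].
exists [set v : 'I_n | inS v], (fun v : 'I_n => lab v); split.
- move=> a b; rewrite !inE => ha hb hab; apply: val_inj; exact: (Hi _ _ (ltn_ord a) (ltn_ord b) ha hb hab).
- move=> u; have [hc hS hl] := Hc u (ltn_ord u).
  exists (Ordinal hc); first by rewrite inE.
  by rewrite /dominates gdist_iff.
- by exists (Ordinal hz); rewrite ?inE.
Qed.

Lemma gen (b k : nat) (bin : nat -> bool) (blab bcov : nat -> nat) :
  (forall j, j < b -> [/\ bcov j < b, bin (bcov j) & blab (bcov j) = nd j (bcov j)]) ->
  (forall i j, i < b -> j < b -> bin i -> bin j -> blab i = blab j -> i = j) ->
  (forall j, j < b -> bin j -> blab j < b) ->
  ~~ bin 0 ->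
  (exists z, [/\ z < b, bin z & blab z = 0]) ->
  has_ext_irr_dom_labeling (path_rel (b + 2 * k)).
Proof.
move=> Hc Hi Hb H0 [z0 [hz0 hzS hzl]].
set n := b + 2 * k.
have hn : n = b + 2 * k by [].
pose inS v := [|| (0 < v <= k), (n - k <= v < n) | (k <= v < k + b) && bin (v - k)].
pose lab v := if 0 < v <= k then n - 2 * v else if n - k <= v then 2 * v + 1 - n
              else blab (v - k).
pose cov u := if u < k then n - 1 - u else if n - k <= u then n - u
              else k + bcov (u - k).
have bne0 : forall j, bin j -> 0 < j by case=> // h; rewrite h in H0.
apply: (@of_nat n inS lab cov).
- move=> u hu; rewrite /cov /inS /lab.
  case: (ltnP u k) => h1.
    split; [lia | apply/orP; right; apply/orP; left; lia|].
    case: ifP => h2; first lia.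
    case: ifP => h3; rewrite /nd; lia.
  case: ifP => h2.
    split; [lia | apply/orP; left; lia|].
    case: ifP => h3; rewrite /nd; lia.
  have hj : u - k < b by lia.
  have [c1 c2 c3] := Hc _ hj.
  have := bne0 _ c2 => c4.
  split; first lia.
    apply/orP; right; apply/orP; right; apply/andP; split; first lia.
    by rewrite addKn.
  case: ifP => h4; first lia.
  case: ifP => h5; first lia.
  rewrite addKn c3 /nd; lia.
- have cls : forall v, v < n -> inS v ->
    [\/ (0 < v <= k) /\ lab v = n - 2 * v,
        (n - k <= v) /\ lab v = 2 * v + 1 - n |
        [/\ k < v < k + b, bin (v - k), lab v = blab (v - k) & blab (v - k) < b]].
    move=> v hv; rewrite /inS /lab.
    case: ifP => h1; first by move=> _; constructor 1.
    case: ifP => h2; first by move=> _; constructor 2.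
    move=> /orP[|/orP[|/andP[h4 h5]]]; try lia.
    have := bne0 _ h5 => h6.
    constructor 3; split => //; first lia.
    apply: Hb => //; lia.
  move=> u v hu hv su sv.
  case: (cls u hu su) => [[a1 ->]|[a1 ->]|[a1 a2 -> a3]];
  case: (cls v hv sv) => [[b1 ->]|[b1 ->]|[b1 b2 -> b3]]; try lia.
  move=> e; have := Hi (u - k) (v - k) ltac:(lia) ltac:(lia) a2 b2 e; lia.
- exists (k + z0); have := bne0 _ hzS => hz1.
  split; first lia.
    rewrite /inS; apply/orP; right; apply/orP; right; rewrite addKn hzS andbT; lia.
  rewrite /lab; case: ifP => h1; first lia.
  case: ifP => h2; first lia.
  by rewrite addKn.
Qed.

Lemma nd_ok a b : nd a b = if a <= b then b - a else a - b.
Proof. rewrite /nd; case: leqP; lia. Qed.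

Lemma base5 k : has_ext_irr_dom_labeling (path_rel (5 + 2 * k)).
Proof.
apply: (@gen 5 k (fun j => j \in [:: 1; 2; 3; 4]) (fun j => nth 0 [:: 0; 1; 2; 0; 3] j)
          (fun j => nth 0 [:: 1; 4; 1; 3; 2] j)) => //.
- by case=> [|[|[|[|[|j]]]]].
- by case=> [|[|[|[|[|i]]]]] [|[|[|[|[|j]]]]].
- by case=> [|[|[|[|[|j]]]]].
- by exists 3.
Qed.

Lemma base6 k : has_ext_irr_dom_labeling (path_rel (6 + 2 * k)).
Proof.
apply: (@gen 6 k (fun j => j \in [:: 1; 2; 4; 5]) (fun j => nth 0 [:: 0; 0; 2; 0; 1; 3] j)
          (fun j => nth 0 [:: 2; 1; 5; 4; 2; 4] j)) => //.
- by case=> [|[|[|[|[|[|j]]]]]].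
- by case=> [|[|[|[|[|[|i]]]]]] [|[|[|[|[|[|j]]]]]].
- by case=> [|[|[|[|[|[|j]]]]]].
- by exists 1.
Qed.

Lemma small1 : has_ext_irr_dom_labeling (path_rel 1).
Proof.
apply: (@of_nat 1 (fun _ => true) (fun _ => 0) (fun _ => 0)).
- by case.
- by case=> [|u] [|v].
- by exists 0.
Qed.

Lemma small4 : has_ext_irr_dom_labeling (path_rel 4).
Proof.
apply: (@of_nat 4 (fun _ => true) (fun j => nth 0 [:: 1; 2; 0; 3] j)
          (fun j => nth 0 [:: 3; 0; 2; 1] j)).
- by case=> [|[|[|[|j]]]].
- by case=> [|[|[|[|i]]]] [|[|[|[|j]]]].
- by exists 2.
Qed.

Lemma dom_nd n (v u : 'I_n) l : dominates (path_rel n) v l u -> l = nd u v.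
Proof. by rewrite /dominates gdist_iff. Qed.

Theorem proposition5p5 (n : nat) :
  1 <= n -> (has_ext_irr_dom_labeling (path_rel n) <-> (n != 2) && (n != 3)).
Proof.
move=> hn; split.
  move=> [S [lam [inj cov [z zS z0]]]].
  have I : forall a b, a \in S -> b \in S -> lam a = lam b -> nat_of_ord a = nat_of_ord b.
    by move=> a b ha hb h; rewrite (inj a b ha hb h).
  have J : forall a b, nat_of_ord a = nat_of_ord b -> lam a = lam b.
    by move=> a b /val_inj ->.
  apply/andP; split; apply/eqP => en; subst n.
  + have [c0 c0S /dom_nd h0] := cov (Ordinal (isT : 0 < 2)).
    have [c1 c1S /dom_nd h1] := cov (Ordinal (isT : 1 < 2)).
    have := I _ _ zS c0S; have := I _ _ zS c1S; have := I _ _ c0S c1S.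
    have := J z c0; have := J z c1; have := J c0 c1.
    have := ltn_ord z; have := ltn_ord c0; have := ltn_ord c1.
    move: h0 h1; rewrite /nd /=; lia.
  + have [c0 c0S /dom_nd h0] := cov (Ordinal (isT : 0 < 3)).
    have [c1 c1S /dom_nd h1] := cov (Ordinal (isT : 1 < 3)).
    have [c2 c2S /dom_nd h2] := cov (Ordinal (isT : 2 < 3)).
    have key : forall (u : nat) (c : 'I_3), c \in S -> lam c = nd u c ->
        u <> z -> c <> z :> nat /\ c <> u :> nat.
      move=> u c cS hc uz; split => e.
        have ecz : c = z by apply: val_inj.
        move: hc; rewrite ecz z0 /nd; lia.
      have := I _ _ cS zS; rewrite hc z0 /nd e; lia.
    move: h0 h1 h2 => /= h0 h1 h2.
    have hz := ltn_ord z.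
    case E: (nat_of_ord z) hz => [|[|[|?]]] // _.
    * have := key _ _ c1S h1 ltac:(lia); have := key _ _ c2S h2 ltac:(lia).
      have := I _ _ c1S c2S; have := ltn_ord c1; have := ltn_ord c2.
      move: h1 h2; rewrite /nd; lia.
    * have := key _ _ c0S h0 ltac:(lia); have := key _ _ c2S h2 ltac:(lia).
      have := I _ _ c0S c2S; have := ltn_ord c0; have := ltn_ord c2.
      move: h0 h2; rewrite /nd; lia.
    * have := key _ _ c1S h1 ltac:(lia); have := key _ _ c0S h0 ltac:(lia).
      have := I _ _ c1S c0S; have := ltn_ord c1; have := ltn_ord c0.
      move: h1 h0; rewrite /nd; lia.
move=> /andP[/eqP n2 /eqP n3].
case: n hn n2 n3 => [|[|[|[|[|n]]]]] // _ _ _; first exact: small1.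
  exact: small4.
have := odd_double_half n; rewrite -muln2.
case/boolP: (odd n) => ho /= e.
  have -> : n.+4.+1 = 6 + 2 * n./2 by lia.
  exact: base6.
have -> : n.+4.+1 = 5 + 2 * n./2 by lia.
exact: base5.
Qed.
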